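(* Let $k>0$ be real and let $M=\begin{bmatrix} k-1 & k-1 & k\\ 1&0&0\\ 0&1&0\end{bmatrix}$ (which is invertible). For every integer $n\ge1$, $$M^{-n}=\left(M^{-1}\right)^n=\left(M^n\right)^{-1}=\begin{bmatrix} J_{-(n-1)} & T_{-(n+1)} & kJ_{-n}\\ J_{-n} & T_{-(n+2)} & kJ_{-(n+1)}\\ J_{-(n+1)} & T_{-(n+3)} & kJ_{-(n+2)}\end{bmatrix},$$ where $T_{-m}=(k-1)J_{-(m-1)}+kJ_{-m}$ for every integer $m$.
   Context: For real $k>0$, the third-order $k$-Jacobsthal sequence $(J_n)=(J_n^{(3)}(k))$ is defined by $J_0=0$, $J_1=1$, $J_2=k-1$ and $J_{n+3}=(k-1)J_{n+2}+(k-1)J_{n+1}+kJ_n$, and extended to negative indices by the backward recurrence $J_{-n}=\frac{1-k}{k}J_{-(n-1)}+\frac{1-k}{k}J_{-(n-2)}+\frac{1}{k}J_{-(n-3)}$ for $n\ge1$. *)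

(* Defs.v *)
From HB Require Import structures.
From mathcomp Require Import all_boot all_order all_algebra.
From mathcomp Require Import reals.
Set Implicit Arguments. Unset Strict Implicit. Unset Printing Implicit Defensive.
Import Order.TTheory GRing.Theory Num.Theory.
Local Open Scope ring_scope.

(* (J_n, J_{n+1}, J_{n+2}) for n : nat, by the forward recurrence
   J_{n+3} = (k-1) J_{n+2} + (k-1) J_{n+1} + k J_n. *)
Fixpoint Jfwd {R : realType} (k : R) (n : nat) : R * R * R :=
  match n with
  | O => (0, 1, k - 1)
  | S m => let: (a, b, c) := Jfwd k m in
           (b, c, (k - 1) * c + (k - 1) * b + k * a)
  end.

(* (J_{-n}, J_{-n+1}, J_{-n+2}) for n : nat, by the backward recurrence
   J_{-n} = (1-k)/k J_{-(n-1)} + (1-k)/k J_{-(n-2)} + 1/k J_{-(n-3)}. *)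
Fixpoint Jbwd {R : realType} (k : R) (n : nat) : R * R * R :=
  match n with
  | O => (0, 1, k - 1)
  | S m => let: (a, b, c) := Jbwd k m in
           ((1 - k) / k * a + (1 - k) / k * b + 1 / k * c, a, b)
  end.

Definition J {R : realType} (k : R) (z : int) : R :=
  match z with
  | Posz n => (Jfwd k n).1.1
  | Negz n => (Jbwd k n.+1).1.1   (* Negz n = -(n+1) *)
  end.

Definition T {R : realType} (k : R) (z : int) : R :=
  (k - 1) * J k (z + 1) + k * J k z.

Definition mx3 {R : realType} (a b c d e f g h i : R) : 'M[R]_3 :=
  \matrix_(r < 3, s < 3)
    nth 0 (nth [::] [:: [:: a; b; c]; [:: d; e; f]; [:: g; h; i]] r) s.

Definition Mk {R : realType} (k : R) : 'M[R]_3 :=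
  mx3 (k - 1) (k - 1) k
      1 0 0
      0 1 0.

(* Main.v *)
Require Import Defs.
From mathcomp Require Import all_boot all_order all_algebra reals.
From mathcomp Require Import ring zify.
Import GRing.Theory Num.Theory.
Local Open Scope ring_scope.

Section S.
Variable R : realType.
Variable k : R.

Definition j (m : nat) : R := (Jbwd k m).1.1.

Lemma jS3 m : j m.+3 = (1-k)/k * j m.+2 + (1-k)/k * j m.+1 + 1/k * j m.
Proof. rewrite /j /=; case: (Jbwd k m) => [[a b] c] /=; done. Qed.

Lemma j0 : j 0 = 0. Proof. by []. Qed.
Lemma j1 : j 1 = (1-k)/k * 0 + (1-k)/k * 1 + 1/k * (k-1). Proof. by []. Qed.
Lemma j2 : j 2 = (1-k)/k * j 1 + (1-k)/k * 0 + 1/k * 1. Proof. by []. Qed.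

Lemma Jj m : J k (- (m%:Z)) = j m.
Proof. case: m => [|m]; first by rewrite oppr0. by rewrite -NegzE. Qed.

Lemma mx3E (a b c d e f g h i : R) r s :
  mx3 a b c d e f g h i r s =
  nth 0 (nth [::] [:: [:: a; b; c]; [:: d; e; f]; [:: g; h; i]] r) s.
Proof. by rewrite mxE. Qed.

Lemma mx3_mul (a b c d e f g h i a' b' c' d' e' f' g' h' i' : R) :
  mx3 a b c d e f g h i *m mx3 a' b' c' d' e' f' g' h' i' =
  mx3 (a*a'+b*d'+c*g') (a*b'+b*e'+c*h') (a*c'+b*f'+c*i')
      (d*a'+e*d'+f*g') (d*b'+e*e'+f*h') (d*c'+e*f'+f*i')
      (g*a'+h*d'+i*g') (g*b'+h*e'+i*h') (g*c'+h*f'+i*i').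
Proof.
apply/matrixP => r s; rewrite !mxE !big_ord_recr big_ord0 /= !mx3E add0r.
case: r => [[|[|[|r]]] Hr] //; case: s => [[|[|[|s]]] Hs] //=.
Qed.

Lemma mx3_1 : (1%:M : 'M[R]_3) = mx3 1 0 0 0 1 0 0 0 1.
Proof.
apply/matrixP => r s; rewrite !mxE.
case: r => [[|[|[|r]]] Hr] //; case: s => [[|[|[|s]]] Hs] //=.
Qed.
Hypothesis hk : 0 < k.
Let k0 : k != 0. Proof. exact: lt0r_neq0. Qed.

Definition t m := (k-1) * j m + k * j m.+1.
Definition N n := mx3 (j n) (t n.+1) (k * j n.+1) (j n.+1) (t n.+2) (k * j n.+2)
   (j n.+2) (t n.+3) (k * j n.+3).
Definition Minv := mx3 0 1 0 0 0 1 (1/k) ((1-k)/k) ((1-k)/k).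

Lemma NS n : N n *m Minv = N n.+1.
Proof.
rewrite /N /Minv mx3_mul /t; congr mx3; rewrite ?jS3; field => //.
Qed.

Lemma N0 : N 0 = Minv.
Proof. rewrite /N /Minv /t; congr mx3; rewrite ?jS3 ?j2 ?j1 ?j0; field => //. Qed.

Lemma MMinv : Mk k *m Minv = 1%:M.
Proof. rewrite /Mk /Minv mx3_mul mx3_1; congr mx3; field => //. Qed.
End S.

Theorem mainTheorem8 (R : realType) (k : R) (hk : 0 < k) :
  Mk k \in unitmx /\
  forall n : nat, (1 <= n)%N ->
    (Mk k)^-1 ^+ n = ((Mk k) ^+ n)^-1 /\
    ((Mk k) ^+ n)^-1 =
      mx3 (J k (- (n%:Z - 1))) (T k (- (n%:Z + 1))) (k * J k (- n%:Z))
          (J k (- n%:Z))       (T k (- (n%:Z + 2))) (k * J k (- (n%:Z + 1)))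
          (J k (- (n%:Z + 1))) (T k (- (n%:Z + 3))) (k * J k (- (n%:Z + 2))).
Proof.
have [Mu _] := mulmx1_unit (@MMinv R k hk).
have Mi : (Mk k)^-1 = Minv R k.
  have -> : (Mk k)^-1 = invmx (Mk k) by [].
  by rewrite -[RHS](mulKmx Mu) (@MMinv R k hk) mulmx1.
split=> // -[|m] // _.
split; first by rewrite exprVn.
rewrite -exprVn Mi.
have -> : Minv R k ^+ m.+1 = N R k m.
  elim: m => [|m IH]; first by rewrite expr1 (@N0 R k hk).
  by rewrite exprSr IH -(@NS R k hk m) mulmxE.
rewrite /N /t /T.
have e1 : - (m.+1%:Z - 1) = - (m%:Z) by lia.
have e2 : - (m.+1%:Z + 1) + 1 = - (m.+1%:Z) by lia.
have e3 : - (m.+1%:Z + 1) = - (m.+2%:Z) by lia.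
have e4 : - (m.+1%:Z + 2) + 1 = - (m.+2%:Z) by lia.
have e5 : - (m.+1%:Z + 2) = - (m.+3%:Z) by lia.
have e6 : - (m.+1%:Z + 3) + 1 = - (m.+3%:Z) by lia.
have e7 : - (m.+1%:Z + 3) = - (m.+4%:Z) by lia.
congr mx3; by rewrite ?e2 ?e4 ?e6 ?e1 ?e3 ?e5 ?e7 ?Jj.
Qed.
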